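(* Let $G$ be a finite nilpotent group such that $sd^*(G)>23/25$. Then $G$ is modular (that is, its subgroup lattice $L(G)$ is a modular lattice), and consequently $G$ is an Iwasawa group.
   Context: For a finite group $G$, $L(G)$ denotes the lattice of all subgroups of $G$. The subgroup commutativity degree of $G$ is $$sd(G)=\frac{1}{|L(G)|^2}\,\left|\{(H,K)\in L(G)^2 \mid HK=KH\}\right|,$$ the probability that two subgroups of $G$ commute. Define $sd^*(G)=\min\{sd(S)\mid S \text{ is a section of } G\}$, where a section of $G$ is a quotient $H/N$ with $N\trianglelefteq H\le G$. An Iwasawa group is a finite nilpotent group whose subgroup lattice is modular. *)

(* Defs.v *)
From HB Require Import structures.
From mathcomp Require Import all_boot all_order all_algebra all_fingroup all_solvable.
Set Implicit Arguments. Unset Strict Implicit. Unset Printing Implicit Defensive.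
Import Order.TTheory GRing.Theory Num.Theory.

Open Scope group_scope.

Definition subgroup_lattice (gT : finGroupType) (G : {set gT}) : {set {group gT}} :=
  [set H : {group gT} | H \subset G].

Definition commuting_pairs (gT : finGroupType) (G : {set gT})
  : {set {group gT} * {group gT}} :=
  [set HK : {group gT} * {group gT} |
     [&& HK.1 \subset G, HK.2 \subset G & (HK.1 * HK.2 == HK.2 * HK.1)%g]].

Definition sd (gT : finGroupType) (G : {set gT}) : rat :=
  ((#|commuting_pairs G|)%:R / ((#|subgroup_lattice G|) ^ 2)%:R)%R.

(* sd^*(G) = min { sd(H/N) | N <| H <= G }.  Since sd <= 1 (and the trivial
   section has sd = 1), 1 is a neutral initial value for the minimum. *)
Definition sdstar (gT : finGroupType) (G : {set gT}) : rat :=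
  \big[Num.min/1%R]_(H : {group gT} | H \subset G)
     \big[Num.min/1%R]_(N : {group gT} | N <| H) sd (H / N).

Definition modular_group (gT : finGroupType) (G : {set gT}) : Prop :=
  forall A B C : {group gT},
    A \subset G -> B \subset G -> C \subset G -> A \subset C ->
    A <*> (B :&: C) = (A <*> B) :&: C.

Definition iwasawa (gT : finGroupType) (G : {set gT}) : Prop :=
  nilpotent G /\ modular_group G.

(* Main.v *)
Require Import Defs.
From mathcomp Require Import all_boot all_order all_algebra all_fingroup all_solvable zify.
Set Implicit Arguments. Unset Strict Implicit. Unset Printing Implicit Defensive.
Import GroupScope.

Lemma card_mulC (gT : finGroupType) (A B : {group gT}) : #|A * B| = #|B * A|.
Proof.
have h1 := mul_cardG A B; have h2 := mul_cardG B A.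
rewrite setIC in h2.
have pos : 0 < #|A :&: B| by rewrite cardG_gt0.
by apply/eqP; rewrite -(eqn_pmul2r pos) -h1 -h2 mulnC.
Qed.

Lemma perm_of_elts (gT : finGroupType) (A B : {group gT}) :
  (forall a b, a \in A -> b \in B -> a * b \in B * A) -> A * B = B * A.
Proof.
move=> H; apply/eqP; rewrite eqEcard card_mulC leqnn andbT.
by apply/subsetP => _ /mulsgP[a b Aa Bb ->]; apply: H.
Qed.

Lemma perm_cyc (gT : finGroupType) (A B : {group gT}) :
  (forall a b, a \in A -> b \in B -> <[a]> * <[b]> = <[b]> * <[a]>) -> A * B = B * A.
Proof.
move=> H; apply: perm_of_elts => a b Aa Bb.
have : a * b \in <[b]> * <[a]> by rewrite -H // mem_mulg // cycle_id.
by apply/subsetP; apply: mulgSS; rewrite cycle_subG.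
Qed.

Lemma quo_perm (gT : finGroupType) (M A B : {group gT}) :
  M \subset A -> M \subset B -> A \subset 'N(M) -> B \subset 'N(M) ->
  (A / M) * (B / M) = (B / M) * (A / M) -> A * B = B * A.
Proof.
move=> sMA sMB nMA nMB E.
have pre : forall C D : {group gT}, M \subset C -> C \subset 'N(M) ->
    M \subset D -> D \subset 'N(M) ->
    coset M @*^-1 ((C / M) * (D / M)) = C * D.
  move=> C D sMC nMC sMD nMD.
  rewrite morphpreMl; last by apply: quotientS.
  by rewrite !quotientK // (mulSGid sMC) (mulSGid sMD).
by rewrite -pre // E pre.
Qed.

Lemma perm_quo (gT : finGroupType) (M A B : {group gT}) :
  A \subset 'N(M) -> B \subset 'N(M) ->
  A * B = B * A -> (A / M) * (B / M) = (B / M) * (A / M).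
Proof. by move=> nMA nMB E; rewrite -!quotientMl // E. Qed.

Lemma fiber_count (T U : finType) (A : {set T}) (f : T -> U) (B : {set U}) m :
  (forall u, u \in B -> m <= #|[set t in A | f t == u]|) -> (#|B| * m <= #|A|)%N.
Proof.
move=> H.
have -> : (#|B| * m)%N = \sum_(u in B) m by rewrite sum_nat_const mulnC.
apply: (@leq_trans (\sum_(u in B) #|[set t in A | f t == u]|)).
  by apply: leq_sum => u /H.
rewrite -sum1_card.
rewrite (partition_big f (fun u => true)) //=.
rewrite [X in _ <= X](bigID (fun u => u \in B)) /=; apply: leq_trans (leq_addr _ _).
apply: leq_sum => u Bu; rewrite -sum1_card.
by apply: eq_leq; apply: eq_bigl => t; rewrite inE.
Qed.

Lemma pgrp_proper_card (gT : finGroupType) p (J H : {group gT}) :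
  prime p -> p.-group H -> J \proper H -> (p * #|J| <= #|H|)%N.
Proof.
move=> pr pH /andP[sJH nHJ].
have L := Lagrange sJH.
have i1 : (1 < #|H : J|)%N by rewrite indexg_gt1.
have [k ek] := p_natP (pnat_dvd (dvdn_indexg H J) pH).
rewrite -L mulnC leq_mul2l ek; apply/orP; right.
case: k ek => [|k] ek; first by rewrite ek in i1.
by rewrite -{1}(expn1 p) leq_exp2l ?prime_gt1.
Qed.

Lemma pgrp_eq (gT : finGroupType) p (J H : {group gT}) :
  prime p -> p.-group H -> J \subset H -> (#|H| < p * #|J|)%N -> J :=: H.
Proof.
move=> pr pH sJH lt; apply/eqP; rewrite eqEproper sJH /=.
apply/negP => pJH; have := pgrp_proper_card pr pH pJH; rewrite leqNgt lt //.
Qed.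

Lemma count_order_p (gT : finGroupType) p (H : {group gT}) : prime p ->
  (#|[set B : {group gT} | (B \subset H) && (#|B| == p)]| * p.-1 <= #|H| - 1)%N.
Proof.
move=> pr.
have -> : (#|H| - 1 = #|H :\ 1%g|)%N by rewrite cardsD (setIidPr _) ?sub1set ?group1 // cards1.
apply: (fiber_count (f := fun g => <[g]>%G)) => B; rewrite inE => /andP[sBH /eqP oB].
have -> : p.-1 = #|B :\ 1%g| by rewrite cardsD (setIidPr _) ?sub1set ?group1 // cards1 oB subn1.
apply: subset_leq_card; apply/subsetP => g; rewrite !inE => /andP[ng1 gB].
rewrite (subsetP sBH) // ng1 /=.
have pB : p.-group B by rewrite pgroupE oB pnat_id.
apply/eqP; apply: group_inj => /=.
apply: (pgrp_eq pr pB); first by rewrite cycle_subG.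
rewrite oB -orderE -{1}(muln1 p) ltn_mul2l prime_gt0 //=.
by rewrite orderE cardG_gt1 cycle_eq1.
Qed.

Lemma arith1 k p : (1 < p)%N -> (k * (p^2 - p) <= p^3 - p)%N -> (k <= p.+1)%N.
Proof. move=> h1 h2. nia. Qed.
Lemma arith2 o p T N : (1 < p)%N -> (2 * p <= o)%N -> (o * (o - p) <= N)%N -> (T <= o + p + 4)%N -> (2 * (T * T) <= 25 * N)%N.
Proof. move=> h1 h2 h3 h4. nia. Qed.
Lemma arith3 p n : (1 < p)%N -> (p * p <= n)%N -> (p ^ 2 < p * n)%N.
Proof. move=> h1 h2. nia. Qed.

Lemma cardU_le (T : finType) (A B : {set T}) : (#|A :|: B| <= #|A| + #|B|)%N.
Proof. by rewrite cardsU leq_subr. Qed.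
Lemma arith4 p : (1 < p)%N -> (p ^ 3 <= p * p)%N -> False.
Proof. move=> h1 h2. nia. Qed.
Lemma arith5 k p : (1 < p)%N -> (k * p.-1 <= p * p - 1)%N -> (k <= p.+1)%N.
Proof. move=> h1 h2. nia. Qed.
Lemma arith6 a e t : (a + e <= t)%N -> (2 * t <= 25 * e)%N -> (a * 25 <= 23 * t)%N.
Proof. move=> h1 h2. lia. Qed.

Import GRing.Theory Num.Theory.
Lemma sd_bound (a t : nat) : (0 < t)%N -> (a * 25 <= 23 * t ^ 2)%N ->
  ((a%:R / (t ^ 2)%:R : rat) <= 23%:R / 25%:R)%R.
Proof.
move=> t0 h.
have h25 : (0 < 25%:R :> rat)%R by rewrite ltr0n.
have ht : (0 < (t ^ 2)%:R :> rat)%R by rewrite ltr0n expn_gt0 t0.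
rewrite (ler_pdivrMr _ _ ht) mulrAC (ler_pdivlMr _ _ h25).
by rewrite -!natrM ler_nat.
Qed.
Lemma arith7 p s d xd yd xp yp : (0 < xp)%N -> (0 < yp)%N -> (s * d <= xd * yd)%N -> (xd <= p * d)%N -> (yd <= p * d)%N -> d = (xp * yp)%N -> (p * xp * (p * yp) < s)%N -> False.
Proof. move=> *. nia. Qed.
Lemma arith8 a b xp p d : (0 < xp)%N -> (xp * p * d = a * b)%N -> (xp <= b)%N -> (a <= p * d)%N.
Proof.
move=> x0 e le.
have : (a * xp <= xp * (p * d))%N by rewrite mulnA e leq_mul2l le orbT.
by rewrite mulnC leq_pmul2l.
Qed.
Lemma arith9 a b p : (p * a * (p * b) = (a * p) * (b * p))%N.
Proof. by rewrite [(p * a)%N]mulnC [(p * b)%N]mulnC. Qed.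
Lemma arith10 p n : (1 < p)%N -> (p ^ n * p <= p * p * (p * p))%N -> (p * p < p ^ n)%N -> (p ^ n = p ^ 3)%N.
Proof.
move=> p1 h1 h2.
have e4 : (p * p * (p * p) = p ^ 4)%N by rewrite !expnS expn0 muln1 !mulnA.
have e2 : (p * p = p ^ 2)%N by rewrite !expnS expn0 muln1.
rewrite -expnSr e4 leq_exp2l // in h1.
rewrite e2 ltn_exp2l // in h2.
by have -> : n = 3 by apply/eqP; rewrite eqn_leq -ltnS h1 h2.
Qed.
Lemma arith11 n m i j : (0 < i)%N -> (n * i = m * j)%N -> (n < m)%N -> (j < i)%N.
Proof.
move=> i0 e nm; rewrite ltnNge; apply/negP => hij.
have : (m * i <= n * i)%N by rewrite e leq_mul2l hij orbT.
by rewrite leq_pmul2r // leqNgt nm.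
Qed.

Lemma count_p3 (gT : finGroupType) p (S : {group gT}) x y :
  prime p -> p.-group S -> #|S| = (p ^ 3)%N -> x \in S -> y \in S ->
  #[x] = p -> #[y] = p ->
  <[x]> <*> <[y]> = S -> <[x]> * <[y]> != <[y]> * <[x]> ->
  (sd S <= 23%:R / 25%:R)%R.
Proof.
move=> pr pS oS Sx Sy ox oy XY nperm.
have p1 : (1 < p)%N := prime_gt1 pr.
pose C := ('Z(S))%G.
have sCS : C \subset S := center_sub S.
have cCS : C \subset 'C(S) := subsetIr _ _.
have nab : ~~ abelian S.
  apply: contra nperm => abS; apply/eqP; apply: centC.
  have h1 : <[x]> \subset S by rewrite cycle_subG.
  have h2 : S \subset 'C(<[y]>).
    by apply: subset_trans abS (centS _); rewrite cycle_subG.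
  exact: subset_trans h1 h2.
have oC : #|C| = p.
  have lS : (logn p #|S| <= 3)%N by rewrite oS pfactorK.
  have [_ prZ] := p3group_extraspecial pS nab lS.
  have pC : p.-group C := pgroupS sCS pS.
  have [k ek] := p_natP pC.
  case: k ek => [|k] ek; first by rewrite ek in prZ.
  have np1 : p != 1%N by rewrite neq_ltn p1 orbT.
  have : (p %| #|C|)%N by rewrite ek expnS dvdn_mulr.
  by move/(prime_nt_dvdP prZ np1).
have jC : forall A : {group gT}, A \subset S -> A <*> C = A * C /\ (#|A <*> C| <= #|A| * p)%N.
  move=> A sAS; have cAC : C \subset 'C(A) := subset_trans cCS (centS sAS).
  rewrite cent_joinEr //; split => //.
  have := mul_cardG A C; rewrite oC => ->.
  by rewrite leq_pmulr // cardG_gt0.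
have hZH : forall H : {group gT}, H \subset S -> #|H| = (p ^ 2)%N -> C \subset H.
  move=> H sHS oH.
  have idx : #|S : H| = p.
    have := Lagrange sHS; rewrite oH oS (expnS p 2) mulnC => /eqP.
    by rewrite eqn_pmul2r ?expn_gt0 ?prime_gt0 // => /eqP.
  have nHS : H <| S by apply: (p_maximal_normal pS); apply: p_index_maximal; rewrite ?idx.
  have ntHC : H :&: C != 1.
    apply/negP => /eqP /(TI_center_nil (pgroup_nil pS) nHS) H1.
    by move: oH; rewrite H1 cards1 => /eqP; rewrite eq_sym -(expn0 p) eqn_exp2l.
  have pC : p.-group C := pgroupS sCS pS.
  have := pgrp_eq pr pC (subsetIr H C); rewrite oC.
  rewrite -{1}(muln1 p) ltn_mul2l prime_gt0 //= cardG_gt1 ntHC => /(_ isT) E.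
  by apply/setIidPr.
have nxC : x \notin C.
  apply: contra nperm => Cx; apply/eqP; apply: centC.
  have h1 : <[x]> \subset 'C(S) by rewrite cycle_subG (subsetP cCS).
  by apply: subset_trans h1 (centS _); rewrite cycle_subG.
have nyC : y \notin C.
  apply: contra nperm => Cy; apply/eqP; apply/esym; apply: centC.
  have h1 : <[y]> \subset 'C(S) by rewrite cycle_subG (subsetP cCS).
  by apply: subset_trans h1 (centS _); rewrite cycle_subG.
have card_sub : forall H : {group gT}, H \subset S ->
    exists2 l, (l <= 3)%N & #|H| = (p ^ l)%N.
  move=> H sHS; exists (logn p #|H|); last exact: card_pgroup (pgroupS sHS pS).
  rewrite -(leq_exp2l _ _ p1) -card_pgroup ?(pgroupS sHS pS) // -oS.
  exact: subset_leq_card.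
pose O := [set A : {group gT} | [&& A \subset S, #|A| == p & A != C]].
pose P2 := [set H : {group gT} | (H \subset S) && (#|H| == (p ^ 2)%N)].
have hP2 : (#|P2| <= p.+1)%N.
  have : (#|P2| * (p ^ 2 - p) <= #|S :\: C|)%N.
    apply: (fiber_count (f := fun g => (<[g]> <*> C)%G)) => H.
    rewrite inE => /andP[sHS /eqP oH].
    have sCH := hZH H sHS oH.
    have -> : (p ^ 2 - p = #|H :\: C|)%N by rewrite cardsD (setIidPr sCH) oH oC.
    apply: subset_leq_card; apply/subsetP => g; rewrite in_setD => /andP[nCg Hg].
    rewrite inE in_setD nCg (subsetP sHS) //=; apply/eqP; apply: group_inj => /=.
    have pH : p.-group H := pgroupS sHS pS.
    apply: (pgrp_eq pr pH); first by rewrite join_subG cycle_subG Hg sCH.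
    have pgC : C \proper <[g]> <*> C.
      rewrite properE joing_subr /=; apply: contra nCg => h.
      have : g \in <[g]> <*> C by rewrite mem_gen // inE cycle_id.
      by move/(subsetP h).
    have := pgrp_proper_card pr (pgroupS _ pS) pgC.
    rewrite join_subG cycle_subG (subsetP sHS _ Hg) sCS => /(_ isT).
    by rewrite oH oC; apply: arith3.
  rewrite cardsD (setIidPr sCS) oS oC; exact: arith1.
have hT : (#|subgroup_lattice S| <= #|O| + p + 4)%N.
  have sub : subgroup_lattice S \subset ([set 1%G; S] :|: (O :|: [set C])) :|: P2.
    apply/subsetP => H; rewrite inE => sHS; have [l l3 oH] := card_sub H sHS.
    rewrite !inE; case: l l3 oH => [|[|[|[|l]]]] //= _ oH.
    - by rewrite (group_inj (card1_trivg oH)) eqxx.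
    - by rewrite sHS oH eqxx /=; case: (H == C); rewrite ?orbT.
    - by rewrite sHS oH eqxx !orbT.
    - have -> : H = S; last by rewrite eqxx orbT.
      apply: group_inj; apply/eqP; rewrite eqEcard sHS oH oS leqnn //.
  apply: leq_trans (subset_leq_card sub) _.
  have h2 : (#|[set 1%G; S]| <= 2)%N by rewrite cards2; case: (_ != _).
  apply: leq_trans (cardU_le _ _) _.
  apply: leq_trans (leq_add (cardU_le _ _) hP2) _.
  apply: leq_trans (leq_add (leq_add h2 (cardU_le _ _)) (leqnn _)) _.
  rewrite cards1; move: #|O| #|P2| => a b; apply: eq_leq; lia.
have cC : forall c z, c \in C -> z \in S -> commute z c.
  by move=> c z /centerP[_ cc] Sz; apply/esym/cc.
have key : forall z, z \in S -> z \notin C -> #[z] = p ->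
   [/\ {in C &, injective (fun c => <[z * c]>%G)},
        forall c, c \in C -> <[z * c]>%G \in O
      & forall c, c \in C -> <[z * c]> \subset <[z]> <*> C].
  move=> z Sz nzC oz.
  have nC : forall c, c \in C -> z * c \notin C.
    move=> c Cc; apply: contra nzC => h.
    by rewrite -(mulgK c z) groupM // groupV.
  have ozc : forall c, c \in C -> #[z * c] = p.
    move=> c Cc; apply/(prime_nt_dvdP pr).
      rewrite order_eq1; apply: contra (nC c Cc) => /eqP ->; exact: group1.
    rewrite order_dvdn expgMn; last exact: cC.
    have : (#[c] %| p)%N by rewrite -oC order_dvdG.
    by rewrite order_dvdn => /eqP ->; rewrite -oz expg_order mulg1.
  have SC : forall c, c \in C -> z * c \in S.
    by move=> c Cc; rewrite groupM // (subsetP sCS).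
  split.
  - move=> c c' Cc Cc' /= E.
    have h : z * c' \in <[z * c]> by rewrite -[<[z * c]>]/(gval <[z * c]>%G) E cycle_id.
    have TI : <[z * c]> :&: C = 1.
      apply: prime_TIg; first by rewrite -orderE ozc.
      by rewrite cycle_subG nC.
    have : (z * c)^-1 * (z * c') \in <[z * c]> :&: C.
      rewrite inE groupM ?groupV ?cycle_id //=.
      by rewrite invMg -mulgA (mulKg z) groupM ?groupV.
    rewrite TI inE => /eqP h2.
    have h3 : c^-1 * c' = 1 by rewrite -h2 invMg -mulgA (mulKg z).
    by apply: (mulgI c^-1); rewrite mulVg h3.
  - move=> c Cc; rewrite inE cycle_subG SC //= -orderE ozc // eqxx /=.
    apply: contra (nC c Cc) => /eqP E.
    by rewrite -E cycle_id.
  - move=> c Cc; rewrite cycle_subG groupM //.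
      by rewrite mem_gen // inE cycle_id.
    by rewrite mem_gen // inE Cc orbT.
have hO : (2 * p <= #|O|)%N.
  have [ix Ox sx] := key x Sx nxC ox.
  have [iy Oy sy] := key y Sy nyC oy.
  pose A := [set <[x * c]>%G | c in C]; pose B := [set <[y * c]>%G | c in C].
  have disj : A :&: B = set0.
    apply/eqP; rewrite -subset0; apply/subsetP => G.
    rewrite inE => /andP[/imsetP[c Cc ->] /imsetP[c' Cc' E]].
    have h : y * c' \in <[x]> <*> C.
      apply: (subsetP (sx c Cc)).
      by rewrite -[<[x * c]>]/(gval <[x * c]>%G) E cycle_id.
    have Yy : y \in <[x]> <*> C.
      by rewrite -(mulgK c' y) groupM // groupV mem_gen // inE Cc' orbT.
    have sSX : S \subset <[x]> <*> C.
      by rewrite -XY join_subG joing_subl cycle_subG Yy.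
    have sXS : <[x]> \subset S by rewrite cycle_subG.
    have [_ cX] := jC <[x]>%G sXS.
    have := leq_trans (subset_leq_card sSX) cX.
    by rewrite oS -orderE ox => /(arith4 p1).
  have sAB : A :|: B \subset O.
    by apply/subsetP => G; rewrite inE => /orP[] /imsetP[c Cc ->]; [apply: Ox | apply: Oy].
  apply: leq_trans (subset_leq_card sAB).
  by rewrite cardsU disj cards0 subn0 !card_in_imset // oC mul2n addnn.
have hAC : forall A : {group gT}, A \in O ->
    (#|O :&: [set B : {group gT} | B \subset A <*> C]| <= p)%N.
  move=> A; rewrite inE => /and3P[sAS /eqP oA nAC].
  have [_ cJ] := jC A sAS; rewrite oA in cJ.
  pose Bs := [set B : {group gT} | (B \subset A <*> C) && (#|B| == p)].
  have hB := count_order_p (A <*> C)%G pr; rewrite -/Bs in hB.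
  have hB2 : (#|Bs| <= p.+1)%N.
    apply: (arith5 p1); apply: leq_trans hB _; exact: leq_sub2r.
  have CB : C \in Bs by rewrite inE joing_subr oC eqxx.
  have sub : O :&: [set B : {group gT} | B \subset A <*> C] \subset Bs :\ C.
    apply/subsetP => B; rewrite !inE => /andP[/and3P[_ /eqP oB nBC] sBJ].
    by rewrite nBC sBJ oB eqxx.
  apply: leq_trans (subset_leq_card sub) _.
  by move: hB2; rewrite (cardsD1 C Bs) CB add1n ltnS.
have hNP : forall A B : {group gT}, A \in O -> B \in O -> ~~ (B \subset A <*> C) ->
    A * B != B * A.
  move=> A B; rewrite !inE => /and3P[sAS /eqP oA nAC] /and3P[sBS /eqP oB _] nBAC.
  apply/negP => /eqP E.
  have eJ := comm_joingE E.
  have sJS : A <*> B \subset S by rewrite join_subG sAS.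
  have pJ : p.-group (A <*> B) := pgroupS sJS pS.
  have cJ : (#|A <*> B| <= p * p)%N.
    rewrite eJ; have := mul_cardG A B; rewrite oA oB => ->.
    exact: leq_pmulr (cardG_gt0 _).
  have pAJ : A \proper A <*> B.
    rewrite properE joing_subl /=; apply: contra nBAC => h.
    apply: subset_trans (joing_subr A B) _; apply: subset_trans h _.
    exact: joing_subl.
  have cJ2 := pgrp_proper_card pr pJ pAJ; rewrite oA in cJ2.
  have oJ : #|A <*> B| = (p ^ 2)%N by apply/eqP; rewrite eqn_leq cJ cJ2.
  have sCJ := hZH _ sJS oJ.
  have sACJ : A <*> C \subset A <*> B by rewrite join_subG joing_subl sCJ.
  have pAAC : A \proper A <*> C.
    rewrite properE joing_subl /=; apply/negP => h.
    have : C \subset A by apply: subset_trans (joing_subr A C) h.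
    move=> sCA; move: nAC; suff -> : A = C by rewrite eqxx.
    by apply: group_inj; apply/eqP; rewrite eq_sym eqEcard sCA oA oC leqnn.
  have cAC := pgrp_proper_card pr (pgroupS (subset_trans sACJ sJS) pS) pAAC.
  rewrite oA in cAC.
  have eAC : A <*> C = A <*> B.
    by apply/eqP; rewrite eqEcard sACJ (leq_trans cJ cAC).
  by move: nBAC; rewrite eAC joing_subr.
pose E := [set AB : {group gT} * {group gT} |
   (AB.1 \in O) && (AB.2 \in O :\: [set B : {group gT} | B \subset AB.1 <*> C])].
have hEcard : (#|O| * (#|O| - p) <= #|E|)%N.
  apply: (fiber_count (f := fst)) => A OA.
  set D := O :\: [set B : {group gT} | B \subset A <*> C].
  have hD : (#|O| - p <= #|D|)%N by rewrite cardsD leq_sub2l // hAC.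
  apply: leq_trans hD _.
  have inj : injective (fun B : {group gT} => (A, B)) by move=> B1 B2 [].
  rewrite -(card_imset D inj); apply: subset_leq_card; apply/subsetP => AB.
  case/imsetP => B DB ->; rewrite inE /= eqxx andbT.
  by rewrite [_ \in E]inE /= OA DB.
pose L := subgroup_lattice S.
pose W := setX L L.
have hEsub : E \subset W :\: commuting_pairs S.
  apply/subsetP => [[A B]]; rewrite inE /= => /andP[OA].
  rewrite in_setD => /andP[nBAC OB].
  have nP := hNP A B OA OB; rewrite inE in nBAC; have {}nP := nP nBAC.
  move: OA OB; rewrite !inE => /and3P[sAS _ _] /and3P[sBS _ _].
  by rewrite sAS sBS (negbTE nP).
have hW : (#|commuting_pairs S| + #|E| <= #|L| * #|L|)%N.
  rewrite -cardsX -/W.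
  have sCW : commuting_pairs S \subset W.
    by apply/subsetP => [[A B]]; rewrite !inE /= => /and3P[-> -> _].
  rewrite -(cardsID (commuting_pairs S) W) (setIidPr sCW).
  by rewrite leq_add2l; apply: subset_leq_card.
rewrite /sd; apply: sd_bound.
  by apply/card_gt0P; exists S; rewrite inE.
rewrite -mulnn; apply: (arith6 hW); exact: arith2 p1 hO hEcard hT.
Qed.



Lemma nil_split (gT : finGroupType) (S : {group gT}) (p : nat) :
  nilpotent S -> ~~ p.-group S -> prime p -> (p %| #|S|)%N ->
  (forall K : {group gT}, K \proper S -> forall A B : {group gT},
      A \subset K -> B \subset K -> A * B = B * A) ->
  forall A B : {group gT}, A \subset S -> B \subset S -> A * B = B * A.
Proof.
move=> nilS npS pr pS Hsub A B sAS sBS.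
pose P := 'O_p(S)%G; pose Q := 'O_p^'(S)%G.
have dp : P \x Q = S := nilpotent_pcoreC p nilS.
have [_ _ cPQ _] := dprodP dp.
have prP : P \proper S.
  rewrite properEneq pcore_sub andbT; apply: contra npS => /eqP <-.
  exact: pcore_pgroup.
have prQ : Q \proper S.
  rewrite properEneq pcore_sub andbT; apply/negP => /eqP eQ.
  have : p^'.-nat p.
    apply: (pnat_dvd pS); rewrite -eQ; exact: pcore_pgroup.
  by rewrite pnatE // !inE eqxx.
have inP : forall a, a \in S -> a.`_p \in P.
  move=> a Sa; rewrite (mem_normal_Hall (nilpotent_pcore_Hall p nilS) (pcore_normal p S)).
    exact: p_elt_constt.
  by rewrite groupX.
have inQ : forall a, a \in S -> a.`_p^' \in Q.
  move=> a Sa; rewrite (mem_normal_Hall (nilpotent_pcore_Hall p^' nilS) (pcore_normal p^' S)).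
    exact: p_elt_constt.
  by rewrite groupX.
have cm : forall u v, u \in P -> v \in Q -> commute u v.
  by move=> u v Pu Qv; apply/esym; apply: (centP (subsetP cPQ v Qv)).
have inA : forall (D : {group gT}) a (pi : nat_pred), a \in D -> a.`_pi \in D.
  by move=> D a pi Da; apply: (subsetP _ _ (cycle_constt pi a)); rewrite cycle_subG.
apply: perm_of_elts => a b Aa Bb.
have Sa := subsetP sAS a Aa; have Sb := subsetP sBS b Bb.
have hP := Hsub P prP (A :&: P)%G (B :&: P)%G (subsetIr _ _) (subsetIr _ _).
have hQ := Hsub Q prQ (A :&: Q)%G (B :&: Q)%G (subsetIr _ _) (subsetIr _ _).
have : a.`_p * b.`_p \in (B :&: P) * (A :&: P).
  by rewrite -hP mem_mulg // inE ?(inA _ _ _ Aa) ?(inA _ _ _ Bb) ?(inP _ Sa) ?(inP _ Sb).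
case/mulsgP => b1 a1 /setIP[Bb1 Pb1] /setIP[Aa1 Pa1] e1.
have : a.`_p^' * b.`_p^' \in (B :&: Q) * (A :&: Q).
  by rewrite -hQ mem_mulg // inE ?(inA _ _ _ Aa) ?(inA _ _ _ Bb) ?(inQ _ Sa) ?(inQ _ Sb).
case/mulsgP => b2 a2 /setIP[Bb2 Qb2] /setIP[Aa2 Qa2] e2.
have -> : a * b = (b1 * b2) * (a1 * a2).
  rewrite -{1}(consttC p a) -{1}(consttC p b).
  rewrite mulgA -(mulgA a.`_p) -(cm _ _ (inP _ Sb) (inQ _ Sa)) mulgA.
  rewrite e1 -mulgA e2 !mulgA -(mulgA b1) (cm _ _ Pa1 Qb2) !mulgA //.
by rewrite mem_mulg // groupM.
Qed.

Lemma quo_bound (gT : finGroupType) (X Y N S : {group gT}) :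
  N <| S -> X \subset S -> Y \subset S -> X <*> Y = S ->
  (X <*> N) * (Y <*> N) = (Y <*> N) * (X <*> N) ->
  (#|S| * #|N| <= #|X <*> N| * #|Y <*> N|)%N.
Proof.
move=> nNS sXS sYS XY E.
have sS : S \subset (X <*> N) <*> (Y <*> N).
  rewrite -XY join_subG; apply/andP; split.
    exact: subset_trans (joing_subl X N) (joing_subl (X <*> N) (Y <*> N)).
  exact: subset_trans (joing_subl Y N) (joing_subr (X <*> N) (Y <*> N)).
rewrite (comm_joingE E) in sS.
rewrite (mul_cardG (X <*> N)%G (Y <*> N)%G); apply: leq_mul; first exact: subset_leq_card.
by apply: subset_leq_card; rewrite subsetI !joing_subr.
Qed.

Lemma core_p (gT : finGroupType) (S : {group gT}) (p : nat) :
  prime p -> p.-group S ->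
  (forall K : {group gT}, K \proper S -> forall A B : {group gT},
      A \subset K -> B \subset K -> A * B = B * A) ->
  (forall N : {group gT}, N <| S -> N :!=: 1 -> forall A B : {group gT},
      N \subset A -> A \subset S -> N \subset B -> B \subset S -> A * B = B * A) ->
  forall x y, x \in S -> y \in S -> <[x]> * <[y]> != <[y]> * <[x]> ->
  (sd S <= 23%:R / 25%:R)%R.
Proof.
move=> pr pS Hsub Hquo x y Sx Sy nperm.
have p1 : (1 < p)%N := prime_gt1 pr.
pose X := <[x]>%G; pose Y := <[y]>%G.
have sXS : X \subset S by rewrite cycle_subG.
have sYS : Y \subset S by rewrite cycle_subG.
have permp : forall A B : {group gT}, A \subset S -> B \subset S -> A <*> B != S ->
    A * B = B * A.
  move=> A B sAS sBS nJ.
  apply: (Hsub (A <*> B)%G); last exact: joing_subr.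
    by rewrite properEneq nJ join_subG sAS.
  exact: joing_subl.
have XY : X <*> Y = S.
  apply/eqP; apply/negPn; apply: contra nperm => h; apply/eqP; exact: permp.
have noN : forall N : {group gT}, N <| S -> N :!=: 1 -> ~~ (N \subset X) /\ ~~ (N \subset Y).
  move=> N nNS ntN; have nN := normal_norm nNS; have sNS := normal_sub nNS.
  split; apply/negP => sN; move/eqP: nperm; apply.
  - have := Hquo N nNS ntN X (Y <*> N)%G sN sXS (joing_subr _ _).
    rewrite join_subG sYS sNS => /(_ isT).
    rewrite /= norm_joinEl ?(subset_trans sYS nN) //.
    have e1 : X * (Y * N) = X * Y.
      by rewrite (normC (subset_trans sYS nN)) mulgA (mulGSid sN).
    have e2 : Y * N * X = Y * X by rewrite -mulgA (mulSGid sN).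
    by move=> E; rewrite -[LHS]e1 E e2.
  - have := Hquo N nNS ntN (X <*> N)%G Y (joing_subr _ _).
    rewrite join_subG sXS sNS => /(_ isT sN sYS).
    rewrite /= norm_joinEl ?(subset_trans sXS nN) //.
    have e1 : X * N * Y = X * Y by rewrite -mulgA (mulSGid sN).
    have e2 : Y * (X * N) = Y * X.
      by rewrite (normC (subset_trans sXS nN)) mulgA (mulGSid sN).
    by move=> E; rewrite -[LHS]e1 E e2.
have TI : X :&: Y = 1.
  pose N := (X :&: Y)%G.
  have cX : X \subset 'C(N) := sub_abelian_cent (cycle_abelian x) (subsetIl X Y).
  have cY : Y \subset 'C(N) := sub_abelian_cent (cycle_abelian y) (subsetIr X Y).
  have nNS : N <| S.
    rewrite /normal (subset_trans (subsetIl _ _) sXS) /= -XY join_subG.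
    by rewrite !cents_norm.
  apply/eqP; apply/negPn; apply/negP => ntN.
  by have [h _] := noN N nNS ntN; rewrite subsetIl in h.
have nx1 : x != 1.
  apply: contra nperm => /eqP ->; by rewrite cycle1 mul1g mulg1.
have ny1 : y != 1.
  apply: contra nperm => /eqP ->; by rewrite cycle1 mul1g mulg1.
have oXY : #|X * Y| = (#[x] * #[y])%N by rewrite TI_cardMg.
have gtS : (#[x] * #[y] < #|S|)%N.
  rewrite -oXY; apply: proper_card; rewrite properEneq mul_subG // andbT.
  apply: contra nperm => /eqP E; apply/eqP; apply/comm_group_setP.
  by rewrite E groupP.
have ordp : forall z, z \in S -> z != 1 -> exists2 k, (0 < k)%N & #[z] = (p ^ k)%N.
  move=> z Sz nz1; have [k ek] := p_natP (mem_p_elt pS Sz).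
  exists k => //; case: k ek => // ek.
  by move: nz1; rewrite -order_eq1 ek eqxx.
have [kx kx0 ox] := ordp x Sx nx1.
have [ky ky0 oy] := ordp y Sy ny1.
have Phi_p : forall b, b \in S -> b ^+ p \in 'Phi(S).
  move=> b Sb; rewrite (Phi_joing pS) mem_gen // inE; apply/orP; right.
  by have := Mho_p_elt 1 Sb (mem_p_elt pS Sb); rewrite expn1.
have fr : forall a b, a \in S -> b \in S -> <[a]> <*> <[b ^+ p]> = S -> <[a]> = S.
  move=> a b Sa Sb E.
  have E2 : 'Phi(S) <*> <[a]> = S.
    apply/eqP; rewrite eqEsubset join_subG Phi_sub cycle_subG Sa /=.
    rewrite -{1}E join_subG joing_subr /= cycle_subG.
    by rewrite mem_gen // inE Phi_p.
  by have := Phi_nongen E2; rewrite genGid.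
have nXYp : X <*> <[y ^+ p]> != S.
  apply/negP => /eqP /(fr _ _ Sx Sy) eX; move/eqP: nperm; apply.
  have sYX : Y \subset X by rewrite /= eX.
  by rewrite (mulGSid sYX) (mulSGid sYX).
have nXpY : <[x ^+ p]> <*> Y != S.
  apply/negP => /eqP; rewrite joingC => /(fr _ _ Sy Sx) eY; move/eqP: nperm; apply.
  have sXY : X \subset Y by rewrite /= eY.
  by rewrite (mulGSid sXY) (mulSGid sXY).
pose Xp := <[x ^+ p]>%G; pose Yp := <[y ^+ p]>%G.
have sXpX : Xp \subset X by rewrite cycle_subG groupX // cycle_id.
have sYpY : Yp \subset Y by rewrite cycle_subG groupX // cycle_id.
have sXpS := subset_trans sXpX sXS; have sYpS := subset_trans sYpY sYS.
have pdv : forall k, (0 < k)%N -> (p %| p ^ k)%N.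
  by move=> k k0; rewrite -(prednK k0) expnS dvdn_mulr.
have oXp : (#|Xp| * p)%N = #[x].
  by rewrite /= -orderE orderXdiv ?divnK // ox pdv.
have oYp : (#|Yp| * p)%N = #[y].
  by rewrite /= -orderE orderXdiv ?divnK // oy pdv.
have TI1 : forall A B : {group gT}, A \subset X -> B \subset Y -> A :&: B = 1.
  by move=> A B sA sB; apply/trivgP; rewrite -TI setISS.
have hK1 := permp X Yp sXS sYpS nXYp.
have hK2 := permp Xp Y sXpS sYS nXpY.
have hD : Xp * Yp = Yp * Xp.
  apply: permp => //; apply: contra nXYp => /eqP E.
  rewrite eqEsubset join_subG sXS sYpS /= -{1}E.
  by rewrite join_subG (subset_trans sXpX (joing_subl _ _)) joing_subr.
pose K1 := (X <*> Yp)%G; pose K2 := (Xp <*> Y)%G; pose D := (Xp <*> Yp)%G.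
have oK1 : #|K1| = (#[x] * #|Yp|)%N by rewrite /= comm_joingE // TI_cardMg ?TI1 // -orderE.
have oK2 : #|K2| = (#|Xp| * #[y])%N by rewrite /= comm_joingE // TI_cardMg ?TI1 // -orderE.
have oD : #|D| = (#|Xp| * #|Yp|)%N by rewrite /= comm_joingE // TI_cardMg ?TI1.
have sDK1 : D \subset K1 by rewrite join_subG (subset_trans sXpX (joing_subl _ _)) joing_subr.
have sDK2 : D \subset K2 by rewrite join_subG joing_subl (subset_trans sYpY (joing_subr _ _)).
have sK1S : K1 \subset S by rewrite join_subG sXS.
have sK2S : K2 \subset S by rewrite join_subG sXpS.
have D0 : (0 < #|D|)%N := cardG_gt0 D.
have idx1 : #|K1 : D| = p.
  apply/eqP; rewrite -(eqn_pmul2l D0) (Lagrange sDK1) oK1 oD -oXp.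
  by rewrite mulnAC.
have idx2 : #|K2 : D| = p.
  apply/eqP; rewrite -(eqn_pmul2l D0) (Lagrange sDK2) oK2 oD -oYp.
  by rewrite mulnA.
have nD1 : D <| K1.
  by apply: (p_maximal_normal (pgroupS sK1S pS)); apply: p_index_maximal; rewrite ?idx1.
have nD2 : D <| K2.
  by apply: (p_maximal_normal (pgroupS sK2S pS)); apply: p_index_maximal; rewrite ?idx2.
have nDS : D <| S.
  rewrite /normal join_subG sXpS sYpS /= -XY join_subG !cycle_subG.
  rewrite (subsetP (normal_norm nD1)) ?(subsetP (normal_norm nD2)) //.
    by rewrite mem_gen // inE cycle_id ?orbT.
  by rewrite mem_gen // inE cycle_id ?orbT.
have nDX : X \subset 'N(D) := subset_trans sXS (normal_norm nDS).
have nDY : Y \subset 'N(D) := subset_trans sYS (normal_norm nDS).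
have cXD : (#|X <*> D| <= p * #|D|)%N.
  rewrite norm_joinEl //.
  apply: (arith8 (cardG_gt0 Xp) _ (subset_leq_card (_ : Xp \subset X :&: D))).
    by rewrite oXp orderE mul_cardG.
  by rewrite subsetI sXpX joing_subl.
have cYD : (#|Y <*> D| <= p * #|D|)%N.
  rewrite norm_joinEl //.
  apply: (arith8 (cardG_gt0 Yp) _ (subset_leq_card (_ : Yp \subset Y :&: D))).
    by rewrite oYp orderE mul_cardG.
  by rewrite subsetI sYpY joing_subr.
have D1 : D :=: 1.
  apply/eqP; apply/negPn; apply/negP => ntD.
  have s1 : X <*> D \subset S by rewrite join_subG sXS normal_sub.
  have s2 : Y <*> D \subset S by rewrite join_subG sYS normal_sub.
  have E := Hquo D nDS ntD (X <*> D)%G (Y <*> D)%G (joing_subr _ _) s1 (joing_subr _ _) s2.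
  have := quo_bound nDS sXS sYS XY E.
  move=> h; apply: (arith7 (cardG_gt0 Xp) (cardG_gt0 Yp) h cXD cYD oD).
  by rewrite arith9 oXp oYp.
have xp1 : x ^+ p = 1.
  have : x ^+ p \in D by rewrite mem_gen // inE cycle_id.
  by rewrite D1 inE => /eqP.
have yp1 : y ^+ p = 1.
  have : y ^+ p \in D by rewrite mem_gen // inE cycle_id orbT.
  by rewrite D1 inE => /eqP.
have ox' : #[x] = p.
  by apply/(prime_nt_dvdP pr); [rewrite order_eq1 | rewrite order_dvdn xp1].
have oy' : #[y] = p.
  by apply/(prime_nt_dvdP pr); [rewrite order_eq1 | rewrite order_dvdn yp1].
have ntS : S :!=: 1 by apply/trivgPn; exists x.
have ntZ : 'Z(S) != 1 by rewrite (center_nil_eq1 (pgroup_nil pS)).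
have [_ pZ _] := pgroup_pdiv (pgroupS (center_sub S) pS) ntZ.
have [z Zz oz] := Cauchy pr pZ.
pose Zg := <[z]>%G.
have nZS : Zg <| S by apply: sub_center_normal; rewrite cycle_subG.
have ntZg : Zg :!=: 1.
  by rewrite -cardG_gt1 /= -orderE oz.
have sZS := normal_sub nZS.
have s1 : X <*> Zg \subset S by rewrite join_subG sXS sZS.
have s2 : Y <*> Zg \subset S by rewrite join_subG sYS sZS.
have E := Hquo Zg nZS ntZg (X <*> Zg)%G (Y <*> Zg)%G (joing_subr _ _) s1 (joing_subr _ _) s2.
have hq := quo_bound nZS sXS sYS XY E.
have cj : forall A : {group gT}, A \subset S -> (#|A <*> Zg| <= #|A| * p)%N.
  move=> A sAS; rewrite norm_joinEl ?(subset_trans sAS (normal_norm nZS)) //.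
  have := mul_cardG A Zg; rewrite /= -orderE oz => ->.
  by rewrite leq_pmulr ?cardG_gt0.
have cX := cj X sXS; have cY := cj Y sYS.
rewrite /= -orderE ox' in cX; rewrite /= -orderE oy' in cY.
have hS : (#|S| * p <= p * p * (p * p))%N.
  have hZ : #|Zg| = p by rewrite /= -orderE oz.
  rewrite hZ in hq; exact: leq_trans hq (leq_mul cX cY).
have oS : #|S| = (p ^ 3)%N.
  rewrite (card_pgroup pS) in hS gtS *.
  by apply: arith10 => //; move: gtS; rewrite ox' oy'.
exact: count_p3 pr pS oS Sx Sy ox' oy' XY nperm.
Qed.
Import Order.TTheory GRing.Theory Num.Theory.

Lemma core (gT : finGroupType) (S : {group gT}) :
  nilpotent S ->
  (forall K : {group gT}, K \proper S -> forall A B : {group gT},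
      A \subset K -> B \subset K -> A * B = B * A) ->
  (forall N : {group gT}, N <| S -> N :!=: 1 -> forall A B : {group gT},
      N \subset A -> A \subset S -> N \subset B -> B \subset S -> A * B = B * A) ->
  (23%:R / 25%:R < sd S)%R ->
  forall A B : {group gT}, A \subset S -> B \subset S -> A * B = B * A.
Proof.
move=> nilS Hsub Hquo hsd A B sAS sBS.
case: (eqVneq S 1%G) => [S1 | ntS].
  have A1 : A :=: 1 by apply/trivgP; rewrite -[1]/(gval 1%G) -S1.
  have B1 : B :=: 1 by apply/trivgP; rewrite -[1]/(gval 1%G) -S1.
  by rewrite A1 B1.
have gt1 : (1 < #|S|)%N by rewrite cardG_gt1; apply: contraNneq ntS => e; apply/eqP; exact: group_inj e.
pose p := pdiv #|S|.
have pr : prime p := pdiv_prime gt1.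
case pgS : (p.-group S).
  apply: perm_cyc => a b Aa Bb.
  case: (eqVneq (<[a]> * <[b]>) (<[b]> * <[a]>)) => // np; exfalso.
  have := core_p pr pgS Hsub Hquo (subsetP sAS a Aa) (subsetP sBS b Bb) np.
  by rewrite leNgt hsd.
exact: nil_split nilS (negbT pgS) pr (pdiv_dvd _) Hsub A B sAS sBS.
Qed.

Lemma bigmin_le_term (I : finType) (P : pred I) (F : I -> rat) j :
  P j -> (\big[Num.min/1%R]_(i | P i) F i <= F j)%R.
Proof. by move=> Pj; rewrite (bigD1 j) //= ge_min lexx. Qed.

Lemma sdstar_le (gT : finGroupType) (G H N : {group gT}) :
  H \subset G -> N <| H -> (sdstar G <= sd (H / N)%g)%R.
Proof.
move=> sHG nNH; rewrite /sdstar.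
apply: le_trans (bigmin_le_term _ sHG) _.
exact: bigmin_le_term.
Qed.

Lemma all_sections_perm (gT : finGroupType) (G : {group gT}) :
  nilpotent G -> (23%:R / 25%:R < sdstar G)%R ->
  forall n (H N : {group gT}), H \subset G -> N <| H -> (#|H / N| <= n)%N ->
  forall A B : {group coset_of N}, A \subset H / N -> B \subset H / N ->
    A * B = B * A.
Proof.
move=> nilG hsd n; elim: n => [|n IH] H N sHG nNH.
  by rewrite leqn0 cards_eq0 => /eqP/setP/(_ 1); rewrite inE group1.
move=> cH.
have nilH : nilpotent (H / N) := quotient_nil N (nilpotentS sHG nilG).
have hsd' : (23%:R / 25%:R < sd (H / N)%g)%R := lt_le_trans hsd (sdstar_le sHG nNH).
have nNH' := normal_norm nNH.
apply: (core nilH) => //.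
- move=> Kb pK A B sAK sBK.
  pose K := (coset N @*^-1 Kb)%G.
  have sKH : K \subset H by rewrite /K /= sub_cosetpre_quo // proper_sub.
  have nNK : N <| K by rewrite /normal sub_cosetpre (subset_trans sKH nNH').
  have eK : K / N = Kb by rewrite /K /= cosetpreK.
  have cK : (#|K / N| <= n)%N by rewrite eK -ltnS; apply: leq_trans cH; apply: proper_card.
  by apply: (IH K N (subset_trans sKH sHG) nNK cK); rewrite eK.
- move=> Mb nMb ntMb A B sMA sAH sMB sBH.
  pose M := (coset N @*^-1 Mb)%G.
  pose A' := (coset N @*^-1 A)%G; pose B' := (coset N @*^-1 B)%G.
  have nMH : M <| H.
    by have := cosetpre_normal Mb (H / N); rewrite quotientGK // nMb.
  have sNM : N \subset M := sub_cosetpre Mb.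
  have pNM : N \proper M.
    rewrite properEneq sNM andbT; apply: contraNneq ntMb => eNM.
    by rewrite -(cosetpreK Mb) -/M -eNM trivg_quotient.
  have cHM : (#|H / M| <= n)%N.
    rewrite -ltnS; apply: leq_trans cH.
    rewrite !card_quotient ?normal_norm //.
    apply: (arith11 (indexg_gt0 _ _) _ (proper_card pNM)).
    by rewrite !Lagrange ?normal_sub.
  have sA'H : A' \subset H by rewrite sub_cosetpre_quo.
  have sB'H : B' \subset H by rewrite sub_cosetpre_quo.
  have nMH' := normal_norm nMH.
  have E := IH H M sHG nMH cHM (A' / M)%G (B' / M)%G (quotientS _ sA'H) (quotientS _ sB'H).
  have E2 := quo_perm (morphpreS _ sMA) (morphpreS _ sMB)
     (subset_trans sA'H nMH') (subset_trans sB'H nMH') E.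
  have E3 := perm_quo (subset_trans sA'H nNH') (subset_trans sB'H nNH') E2.
  by rewrite !cosetpreK in E3.
Qed.

Lemma all_perm (gT : finGroupType) (G : {group gT}) :
  nilpotent G -> (23%:R / 25%:R < sdstar G)%R ->
  forall A B : {group gT}, A \subset G -> B \subset G -> A * B = B * A.
Proof.
move=> nilG hsd A B sAG sBG.
have E := all_sections_perm nilG hsd (subxx G) (normal1 G) (leqnn #|G / 1|)
   (quotientS 1 sAG) (quotientS 1 sBG).
have nA : A \subset 'N(1%G) by rewrite norm1 subsetT.
have nB : B \subset 'N(1%G) by rewrite norm1 subsetT.
exact: quo_perm (sub1G A) (sub1G B) nA nB E.
Qed.

Theorem theorem1 (gT : finGroupType) (G : {group gT}) :
  nilpotent G -> (23%:R / 25%:R < sdstar G)%R ->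
  modular_group G /\ iwasawa G.
Proof.
move=> nilG hsd.
have md : modular_group G.
  move=> A B C sAG sBG sCG sAC.
  have pAB := all_perm nilG hsd sAG sBG.
  have pABC := all_perm nilG hsd sAG (subset_trans (subsetIl B C) sBG).
  by rewrite (comm_joingE pABC) (comm_joingE pAB) group_modl.
by split => //; split.
Qed.
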